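(* Let $\mathcal C\subseteq 2^{[n]}$ be a degree two code. Then a neuron $i\in[n]$ is a $k$-piercing of $\mathcal C$ if and only if $i$ is an elimination neuron with exactly $k$ neighbors in $G(\mathcal C)$.
   Context: A code is a set $\mathcal C\subseteq 2^{[n]}$, $[n]=\{1,\dots,n\}$, elements of $[n]$ being neurons. Standing conventions: $\emptyset\in\mathcal C$; every neuron lies in some codeword; no two distinct neurons lie in exactly the same codewords. $\mathcal C\setminus i$ is obtained by removing $i$ from every codeword. For $\sigma\subseteq\tau$, $[\sigma,\tau]=\{\gamma:\sigma\subseteq\gamma\subseteq\tau\}$, of rank $|\tau\setminus\sigma|$. A neuron $i$ is a $k$-piercing of $\mathcal C$ if there are $\sigma\subseteq\tau\subseteq[n]\setminus\{i\}$ with $[\sigma,\tau]$ of rank $k$, $[\sigma,\tau]\subseteq\mathcal C\setminus i$, and $\mathcal C=(\mathcal C\setminus i)\cup[\sigma\cup\{i\},\tau\cup\{i\}]$. A pseudo-monomial in $\mathbb F_2[x_1,\dots,x_n]$ is $\prod_{i\in\sigma}x_i\prod_{j\in\tau}(1-x_j)$ with $\sigma\cap\tau=\emptyset$, ordered by divisibility. $J_\mathcal C=\langle\rho_\sigma:\sigma\notin\mathcal C\rangle$ with $\rho_\sigma=\prod_{i\in\sigma}x_i\prod_{j\notin\sigma}(1-x_j)$; $\mathrm{CF}(J_\mathcal C)$ is the set of minimal pseudo-monomials in $J_\mathcal C$. $\mathcal C$ is degree two if every element of $\mathrm{CF}(J_\mathcal C)$ has degree two. For degree two $\mathcal C$: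 $G(\mathcal C)$ is the graph on $[n]$ with edge $ij$ whenever $\mathrm{CF}(J_\mathcal C)$ contains no pseudo-monomial whose two variables are $x_i,x_j$; $P(\mathcal C)$ is the partial order on $[n]$ with $i<j$ iff $x_i(1-x_j)\in\mathrm{CF}(J_\mathcal C)$. A neuron $i$ is an elimination neuron if it is a simplicial vertex of $G(\mathcal C)$ (its neighborhood is a clique) and a minimal element of $P(\mathcal C)$. *)

(* Defs.v *)
From HB Require Import structures.
From mathcomp Require Import all_boot all_order all_algebra.
From mathcomp Require Import mpoly.
Set Implicit Arguments. Unset Strict Implicit. Unset Printing Implicit Defensive.
Import GRing.Theory.
Local Open Scope ring_scope.

Section Codes.
Variable n : nat.

Definition code := {set {set 'I_n}}.

Definition standing (C : code) : Prop :=
  [/\ set0 \in C,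
      (forall i : 'I_n, exists2 c, c \in C & i \in c) &
      (forall i j : 'I_n, (forall c, c \in C -> (i \in c) = (j \in c)) -> i = j)].

Definition code_del (C : code) (i : 'I_n) : code := [set c :\ i | c in C].

Definition interval (s t : {set 'I_n}) : code := [set g : {set 'I_n} | (s \subset g) && (g \subset t)].

Definition k_piercing (C : code) (k : nat) (i : 'I_n) : Prop :=
  exists s t : {set 'I_n},
    [/\ s \subset t, t \subset ~: [set i], #|t :\: s| = k,
        interval s t \subset code_del C i &
        C = code_del C i :|: interval (i |: s) (i |: t)].

Definition poly2 := {mpoly 'F_2[n]}.

(* pseudo-monomial x_sigma (1-x)_tau (meaningful when sigma, tau disjoint) *)
Definition pm (s t : {set 'I_n}) : poly2 :=
  (\prod_(i in s) 'X_i) * (\prod_(j in t) (1 - 'X_j)).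

Definition is_pm (s t : {set 'I_n}) : bool := [disjoint s & t].

Definition rho (s : {set 'I_n}) : poly2 := pm s (~: s).

Definition inJ (C : code) (p : poly2) : Prop :=
  exists q : {set 'I_n} -> poly2, p = \sum_(s in ~: C) q s * rho s.

Definition pdvd (p q : poly2) : Prop := exists r : poly2, q = r * p.

(* (s,t) gives an element of CF(J_C): a pseudo-monomial in J_C, minimal
   w.r.t. divisibility among pseudo-monomials in J_C *)
Definition inCF (C : code) (s t : {set 'I_n}) : Prop :=
  [/\ is_pm s t, inJ C (pm s t) &
      forall s' t', is_pm s' t' -> inJ C (pm s' t') -> pdvd (pm s' t') (pm s t) ->
        pm s' t' = pm s t].

(* degree of the pseudo-monomial x_s (1-x)_t is |s| + |t| *)
Definition degree_two (C : code) : Prop :=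
  forall s t, inCF C s t -> (#|s| + #|t| = 2)%N.

Definition Gedge (C : code) (i j : 'I_n) : Prop :=
  i <> j /\ ~ (exists s t, inCF C s t /\ s :|: t = [set i; j]).

Definition Plt (C : code) (i j : 'I_n) : Prop := inCF C [set i] [set j].

Definition num_neighbors (C : code) (i : 'I_n) (k : nat) : Prop :=
  exists N : {set 'I_n}, (forall j, j \in N <-> Gedge C i j) /\ #|N| = k.

Definition simplicial (C : code) (i : 'I_n) : Prop :=
  forall j l, Gedge C i j -> Gedge C i l -> j <> l -> Gedge C j l.

Definition P_minimal (C : code) (i : 'I_n) : Prop := forall j, ~ Plt C j i.

Definition elimination_neuron (C : code) (i : 'I_n) : Prop :=
  simplicial C i /\ P_minimal C i.

End Codes.

(* Main.v *)
Require Import Defs.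
From mathcomp Require Import all_boot all_order all_algebra.
From mathcomp Require Import mpoly ring zify.
Set Implicit Arguments. Unset Strict Implicit. Unset Printing Implicit Defensive.
Import GRing.Theory.
Local Open Scope ring_scope.

Section Poly.
Variable n : nat.
Implicit Types (s t u : {set 'I_n}) (C : code n).

Definition ind u : 'I_n -> 'F_2 := fun j => (j \in u)%:R.

Lemma prod_ind s u : \prod_(i in s) ind u i = (s \subset u)%:R.
Proof.
case: (boolP (s \subset u)) => H.
  by rewrite big1 // => i Hi; rewrite /ind (subsetP H i Hi).
have [x Hxs Hxu] : exists2 x, x \in s & x \notin u.
  by move/subsetPn: H => [x ? ?]; exists x.
by rewrite (bigD1 x) //= /ind (negbTE Hxu) mul0r.
Qed.

Lemma prod_ind' t u : \prod_(j in t) (1 - ind u j) = [disjoint u & t]%:R.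
Proof.
case: (boolP [disjoint u & t]) => H.
  rewrite big1 // => i Hi; rewrite /ind.
  by move/disjointFl: H => /(_ i Hi) ->; rewrite subr0.
have [x Hxs Hxu] : exists2 x, x \in t & x \in u.
  by move/pred0Pn: H => [x /andP[? ?]]; exists x.
by rewrite (bigD1 x) //= /ind Hxu subrr mul0r.
Qed.

Lemma ev_pm s t u : (pm s t).@[ind u] = ((s \subset u) && [disjoint u & t])%:R.
Proof.
rewrite /pm rmorphM !rmorph_prod /=.
under eq_bigr do rewrite mevalXU.
under [X in _ * X]eq_bigr do rewrite mevalB meval1 mevalXU.
by rewrite prod_ind prod_ind' -natrM mulnb.
Qed.

Definition Eb C s t := [exists c, [&& c \in C, s \subset c & [disjoint c & t]]].

Lemma EbP C s t : reflect (exists2 c, c \in C & (s \subset c) && [disjoint c & t]) (Eb C s t).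
Proof.
apply: (iffP existsP) => [[c /and3P[H1 H2 H3]]|[c H1 /andP[H2 H3]]]; exists c => //.
  by rewrite H2.
by rewrite H1 H2.
Qed.

Lemma Eb_mono C s t s' t' : s' \subset s -> t' \subset t -> Eb C s t -> Eb C s' t'.
Proof.
move=> H1 H2 /EbP[c Hc /andP[H3 H4]]; apply/EbP; exists c => //.
rewrite (subset_trans H1 H3) /=.
exact: (disjointWr H2).
Qed.

Lemma inJ_add C p q : inJ C p -> inJ C q -> inJ C (p + q).
Proof.
move=> [f ->] [g ->]; exists (fun v => f v + g v).
by rewrite -big_split /=; apply: eq_bigr => v _; rewrite mulrDl.
Qed.

Lemma pm_add s t k : k \notin s -> k \notin t -> pm s t = pm (k |: s) t + pm s (k |: t).
Proof.
move=> Hs Ht; rewrite /pm !big_setU1 //=.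
set A := \prod_(i in s) _; set B := \prod_(j in t) _.
ring.
Qed.


Lemma disjU1 (x : 'I_n) (A B : {set 'I_n}) : [disjoint x |: A & B] = (x \notin B) && [disjoint A & B].
Proof. by rewrite !disjoints_subset subUset sub1set inE. Qed.

Lemma inJ_box C m : forall s t, #|~: (s :|: t)| = m -> [disjoint s & t] -> ~~ Eb C s t ->
  inJ C (pm s t).
Proof.
elim: m => [|m IH] s t Hm Hd HE.
  have Ht : t = ~: s.
    apply/setP => x; rewrite inE.
    have : x \notin ~: (s :|: t) by apply/negP => Hx; move/card0_eq: Hm => /(_ x); rewrite Hx.
    rewrite !inE negbK; case/orP => Hx.
      by rewrite Hx; apply/negP => Ht; move/disjointFr: Hd => /(_ x Hx); rewrite Ht.
    by rewrite Hx; apply/esym/negP => Hs; move/disjointFr: Hd => /(_ x Hs); rewrite Hx.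
  have HsC : s \in ~: C.
    rewrite inE; apply/negP => Hs; move/negP: HE; apply; apply/EbP; exists s => //.
    by rewrite subxx Hd.
  exists (fun v => if v == s then 1 else 0).
  rewrite (bigD1 s) //= eqxx mul1r big1 ?addr0; first by rewrite Ht.
  by move=> v /andP[_ /negbTE ->]; rewrite mul0r.
have [k Hk] : exists k, k \in ~: (s :|: t).
  by apply/set0Pn; rewrite -card_gt0 Hm.
move: (Hk); rewrite !inE negb_or => /andP[Hks Hkt].
have Hc : forall s' t', s' :|: t' = k |: (s :|: t) -> #|~: (s' :|: t')| = m.
  move=> s' t' ->.
  have -> : ~: (k |: (s :|: t)) = ~: (s :|: t) :\ k.
    by apply/setP => x; rewrite !inE negb_or andbC.
  by move: Hm; rewrite (cardsD1 k) Hk add1n => -[].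
rewrite (pm_add Hks Hkt); apply: inJ_add; apply: IH.
- by apply: Hc; rewrite setUA.
- by rewrite disjU1 Hd Hkt.
- by apply: contra HE; apply: Eb_mono => //; apply: subsetUr.
- by apply: Hc; rewrite setUCA.
- by rewrite disjoint_sym disjU1 disjoint_sym Hd Hks.
- by apply: contra HE; apply: Eb_mono => //; apply: subsetUr.
Qed.

Lemma F2_10 : (1 : 'F_2) != 0.
Proof. exact: oner_neq0. Qed.

Lemma J_box C s t : inJ C (pm s t) -> ~~ Eb C s t.
Proof.
move=> [q Hq]; apply/negP => /EbP[c Hc /andP[H1 H2]].
have := congr1 (meval (ind c)) Hq.
rewrite ev_pm H1 H2 /= rmorph_sum big1.
  by move/eqP; rewrite (negbTE F2_10).
move=> v; rewrite inE => Hv /=; rewrite mevalM /rho ev_pm.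
case: (boolP (v \subset c)) => Hvc /=; last by rewrite mulr0.
case: (boolP [disjoint c & ~: v]) => Hcv /=; last by rewrite mulr0.
move: Hcv; rewrite disjoints_subset setCK => Hcv.
by move: Hv; rewrite (_ : v = c) ?Hc //; apply/eqP; rewrite eqEsubset Hvc.
Qed.

Lemma pdvd_sub s t s' t' : [disjoint s & t] -> pdvd (pm s' t') (pm s t) ->
  (s' \subset s) /\ (t' \subset t).
Proof.
move=> Hd [r Hr]; split.
  apply/negPn/negP => H.
  have := congr1 (meval (ind s)) Hr.
  rewrite ev_pm mevalM !ev_pm subxx Hd (negbTE H) /= mulr0.
  by move/eqP; rewrite (negbTE F2_10).
apply/negPn/negP => H.
have := congr1 (meval (ind (~: t))) Hr.
rewrite ev_pm mevalM !ev_pm -disjoints_subset Hd.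
have -> : [disjoint ~: t & t] by rewrite disjoint_sym disjoints_subset setCK.
have -> : [disjoint ~: t & t'] = false.
  by rewrite disjoint_sym disjoints_subset setCK (negbTE H).
rewrite andbF mulr0.
by move/eqP; rewrite (negbTE F2_10).
Qed.

Lemma pm_dvd s t s' t' : s' \subset s -> t' \subset t -> pdvd (pm s' t') (pm s t).
Proof.
move=> Hs Ht; exists (pm (s :\: s') (t :\: t')); rewrite /pm.
rewrite (big_setID s') (big_setID (A := t) t') /= (setIidPr Hs) (setIidPr Ht).
set A := \prod_(i in s') _; set B := \prod_(i in s :\: s') _.
set D := \prod_(i in t') _; set E := \prod_(i in t :\: t') _.
ring.
Qed.

Lemma inJ_box' C s t : [disjoint s & t] -> ~~ Eb C s t -> inJ C (pm s t).
Proof. exact: (@inJ_box C _ s t erefl). Qed.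

Lemma CF_box C s t : inCF C s t -> [disjoint s & t] /\ ~~ Eb C s t.
Proof. by move=> [H1 H2 _]; split => //; apply: J_box. Qed.

Lemma CF_min C s t s' t' : inCF C s t -> s' \subset s -> t' \subset t -> ~~ Eb C s' t' ->
  s' = s /\ t' = t.
Proof.
move=> [Hd HJ Hm] Hs Ht HE.
have Hd' : [disjoint s' & t'] by apply: (disjointWl Hs); apply: (disjointWr Ht).
have Heq := Hm s' t' Hd' (inJ_box' Hd' HE) (pm_dvd Hs Ht).
have [H1 H2] : (s \subset s') /\ (t \subset t').
  by apply: pdvd_sub Hd' _; exists 1; rewrite mul1r Heq.
by split; apply/eqP; rewrite eqEsubset ?Hs ?Ht ?H1 ?H2.
Qed.

Lemma mkCF C s t : [disjoint s & t] -> ~~ Eb C s t ->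
  (forall s' t', s' \subset s -> t' \subset t -> ~~ Eb C s' t' -> s' = s /\ t' = t) ->
  inCF C s t.
Proof.
move=> Hd HE Hm; split => //; first exact: inJ_box'.
move=> s' t' Hd' HJ Hdv.
have [H1 H2] := pdvd_sub Hd Hdv.
by have [-> ->] := Hm s' t' H1 H2 (J_box HJ).
Qed.
End Poly.

Section Comb.
Local Open Scope nat_scope.
Variable n : nat.
Implicit Types (s t a b c u : {set 'I_n}) (C : code n).

Lemma Eb0 C t : standing C -> Eb C set0 t.
Proof. by rewrite /standing => -[H0 _ _]; apply/EbP; exists set0; rewrite /= ?disjoints_subset ?sub0set. Qed.

Lemma Eb1 C x : standing C -> Eb C [set x] set0.
Proof.
rewrite /standing => -[_ H1 _]; have [c Hc Hx] := H1 x; apply/EbP; exists c => //.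
by rewrite sub1set Hx disjoints_subset setC0 subsetT.
Qed.

Lemma low_card C a b : standing C -> ~~ Eb C a b -> (2 <= #|a| + #|b|)%N.
Proof.
move=> St HE.
have Ha : #|a| != 0%N.
  apply/negP => /eqP/cards0_eq Ha; subst a; by rewrite (Eb0 b St) in HE.
have Hab : ~~ ((#|a| == 1%N) && (#|b| == 0%N)).
  apply/negP => /andP[/cards1P[x Hx] /eqP/cards0_eq Hb]; subst a b.
  by rewrite (Eb1 x St) in HE.
lia.
Qed.

Lemma mkCF2 C a b : standing C -> [disjoint a & b] -> #|a| + #|b| = 2 -> ~~ Eb C a b ->
  inCF C a b.
Proof.
move=> St Hd Hc HE; apply: mkCF => // s' t' Hs Ht HE'.
have := low_card St HE'.
have := subset_leq_card Hs; have := subset_leq_card Ht.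
move=> H1 H2 H3.
have E1 : #|a| <= #|s'| by lia.
have E2 : #|b| <= #|t'| by lia.
by split; apply/eqP; rewrite eqEcard ?Hs ?Ht ?E1 ?E2.
Qed.


Lemma pair_cases (x y : 'I_n) a b : x != y -> [disjoint a & b] -> a :|: b = [set x; y] ->
  [\/ a = [set x; y] /\ b = set0, (a = [set x] /\ b = [set y]),
      (a = [set y] /\ b = [set x]) | (a = set0 /\ b = [set x; y])].
Proof.
move=> Hxy Hd Hu.
have Hz : forall z, z \in a -> z \in b = false.
  by move=> z Ha; move/disjointFr: Hd => /(_ z Ha).
have Hm : forall z, (z \in a) || (z \in b) = (z == x) || (z == y).
  by move=> z; rewrite -in_setU Hu !inE.
have Hyx : (y == x) = false by rewrite eq_sym (negbTE Hxy).
have Hb' : forall z, (z == x) || (z == y) -> z \in b = (z \notin a).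
  move=> z Hzz; case Hza: (z \in a); first by rewrite Hz.
  by move: (Hm z); rewrite Hza Hzz.
have Hn : forall z, z != x -> z != y -> (z \in a = false) /\ (z \in b = false).
  move=> z H1 H2; move: (Hm z); rewrite (negbTE H1) (negbTE H2).
  by case: (z \in a); case: (z \in b).
have Ha : forall z, z \in a = ((z == x) && (x \in a)) || ((z == y) && (y \in a)).
  move=> z; case: (eqVneq z x) => [->|Hzx].
    by rewrite ?eqxx ?(negbTE Hxy) /= ?orbF ?andbF.
  case: (eqVneq z y) => [->|Hzy]; first by rewrite ?eqxx ?Hyx /= ?orbF ?andbF.
  by rewrite (Hn z Hzx Hzy).1 ?(negbTE Hzx) ?(negbTE Hzy).
have Hb : forall z, z \in b = ((z == x) && (x \notin a)) || ((z == y) && (y \notin a)).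
  move=> z; case: (eqVneq z x) => [->|Hzx].
    by rewrite Hb' ?eqxx // ?(negbTE Hxy) /= ?orbF ?andbF.
  case: (eqVneq z y) => [->|Hzy]; first by rewrite Hb' ?eqxx ?orbT // ?Hyx /= ?orbF ?andbF.
  by rewrite (Hn z Hzx Hzy).2 ?(negbTE Hzx) ?(negbTE Hzy).
case Hxa: (x \in a); case Hya: (y \in a).
- by constructor 1; split; apply/setP => z; rewrite ?(Ha z) ?(Hb z) Hxa Hya !inE ?andbT ?andbF.
- by constructor 2; split; apply/setP => z; rewrite ?(Ha z) ?(Hb z) Hxa Hya !inE ?andbT ?andbF ?orbF.
- by constructor 3; split; apply/setP => z; rewrite ?(Ha z) ?(Hb z) Hxa Hya !inE ?andbT ?andbF ?orbF.
- by constructor 4; split; apply/setP => z; rewrite ?(Ha z) ?(Hb z) Hxa Hya !inE ?andbT ?andbF ?orbF.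
Qed.


Lemma CF2_forms C a b : standing C -> degree_two C -> inCF C a b ->
  (exists x y, [/\ x != y, a = [set x; y] & b = set0]) \/
  (exists x y, [/\ x != y, a = [set x] & b = [set y]]).
Proof.
move=> St D2 HCF; have Hc := D2 _ _ HCF; have [Hd HE] := CF_box HCF.
have Ha : #|a| != 0.
  apply/negP => /eqP/cards0_eq Ha; subst a; by rewrite (Eb0 b St) in HE.
case: (eqVneq #|a| 1) => Ha1.
  right; move: (Ha1) => /eqP/cards1P[x Hx]; subst a.
  have /cards1P[y Hy] : #|b| == 1 by rewrite cards1 in Hc; apply/eqP; lia.
  subst b; exists x, y; split => //.
  by apply/negP => /eqP Hxy; subst y; move: Hd; rewrite disjoints1 inE eqxx.
left; have /cards2P[x [y [Hxy Hx]]] : #|a| == 2 by apply/eqP; lia.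
have /eqP/cards0_eq Hb : #|b| == 0 by apply/eqP; lia.
by exists x, y; split.
Qed.

Lemma mem_of_CF C c : c \notin C ->
  exists a b, [/\ inCF C a b, a \subset c & [disjoint c & b]].
Proof.
move=> Hc.
pose P : pred nat := fun m => [exists a : {set 'I_n}, exists b : {set 'I_n}, [&& a \subset c, b \subset ~: c, ~~ Eb C a b & #|a| + #|b| == m]].
have exP : exists m, P m.
  exists (#|c| + #|~: c|); apply/existsP; exists c; apply/existsP; exists (~: c).
  rewrite subxx subxx eqxx /= andbT; apply/negP => /EbP[d Hd /andP[H1 H2]].
  move: H2; rewrite disjoints_subset setCK => H2.
  by move: Hd; rewrite (_ : d = c) ?(negbTE Hc) //; apply/eqP; rewrite eqEsubset H1 H2.
case: (ex_minnP exP) => m /existsP[a /existsP[b /and4P[Ha Hb HE /eqP Hm]]] Hmin.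
have Hd : [disjoint a & b].
  by rewrite disjoints_subset; apply: subset_trans Ha _; rewrite -setCS setCK.
exists a, b; split => //; last by rewrite disjoint_sym disjoints_subset.
apply: mkCF => // s' t' Hs Ht HE'.
have : m <= #|s'| + #|t'|.
  apply: Hmin; apply/existsP; exists s'; apply/existsP; exists t'.
  by rewrite (subset_trans Hs Ha) (subset_trans Ht Hb) HE' eqxx.
have := subset_leq_card Hs; have := subset_leq_card Ht.
move=> H1 H2 H3.
have E1 : #|a| <= #|s'| by lia.
have E2 : #|b| <= #|t'| by lia.
by split; apply/eqP; rewrite eqEcard ?Hs ?Ht ?E1 ?E2.
Qed.

Lemma Gedge_of C x y : x != y ->
  (forall a b, a :|: b = [set x; y] -> [disjoint a & b] -> Eb C a b) -> Gedge C x y.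
Proof.
move=> Hxy H; split; first by apply/eqP.
move=> [a [b [HCF Hu]]]; have [Hd HE] := CF_box HCF.
by rewrite (H a b Hu Hd) in HE.
Qed.

Lemma notGedge C x y a b : inCF C a b -> a :|: b = [set x; y] -> ~ Gedge C x y.
Proof. by move=> H1 H2 [_ H]; apply: H; exists a, b. Qed.

End Comb.

Section Main.
Local Open Scope nat_scope.
Variable n : nat.
Implicit Types (s t a b c u : {set 'I_n}) (C : code n).

Lemma inCF11 C x y : standing C -> x != y -> ~~ Eb C [set x] [set y] -> inCF C [set x] [set y].
Proof.
move=> St Hxy HE; apply: mkCF2 => //; last by rewrite !cards1.
by rewrite disjoints1 inE.
Qed.

Lemma inCF20 C x y : standing C -> x != y -> ~~ Eb C [set x; y] set0 -> inCF C [set x; y] set0.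
Proof.
move=> St Hxy HE; apply: mkCF2 => //; last by rewrite cards2 Hxy cards0.
by rewrite disjoints_subset setC0 subsetT.
Qed.

Lemma forward C k i : standing C -> k_piercing C k i ->
  elimination_neuron C i /\ num_neighbors C i k.
Proof.
move=> St [s [t [Hst Hti Hk Hint HC]]].
have HC' : forall c, c \in C = (c \in code_del C i) || (c \in Defs.interval (i |: s) (i |: t)).
  by move=> c; rewrite {1}HC in_setU.
have Hit : i \notin t by apply/negP => /(subsetP Hti); rewrite !inE eqxx.
have His : i \notin s by apply: contra Hit; apply: (subsetP Hst).
have Hdel : forall c, c \in code_del C i -> i \notin c.
  by move=> c /imsetP[d _ ->]; rewrite !inE eqxx.
have F1 : forall c, c \in C -> i \in c -> (s \subset c) && (c \subset i |: t).
  move=> c; rewrite HC' => /orP[/Hdel H H'|]; first by rewrite H' in H.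
  rewrite inE => /andP[H1 H2] _; rewrite H2 andbT.
  by apply: subset_trans H1; apply: subsetUr.
have F2 : forall c, c \in C -> c :\ i \in C.
  by move=> c Hc; rewrite HC'; apply/orP; left; apply: imset_f.
have F3 : forall w : {set 'I_n}, s \subset w -> w \subset i |: t -> w \in C.
  move=> w H1 H2; rewrite HC'; apply/orP; case Hiw: (i \in w).
    by right; rewrite inE H2 andbT subUset sub1set Hiw H1.
  left; apply: (subsetP Hint); rewrite inE H1 /=.
  apply/subsetP => z Hz; move: (subsetP H2 z Hz); rewrite !inE.
  by case/orP => // /eqP Hzi; subst z; rewrite Hz in Hiw.
have W : forall a b, [disjoint a & b] -> a :|: b \subset i |: (t :\: s) -> Eb C a b.
  move=> a b Hd Hab; apply/EbP; exists (s :|: a).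
    apply: F3; first exact: subsetUl.
    rewrite subUset; apply/andP; split.
      by apply: subset_trans Hst (subsetUr _ _).
    apply: subset_trans (subset_trans (subsetUl _ b) Hab) _.
    by apply: setUS; apply: subsetDl.
  rewrite subsetUr /= disjoints_subset subUset -!disjoints_subset Hd andbT.
  rewrite disjoint_sym disjoints_subset; apply: subset_trans (subset_trans (subsetUr a _) Hab) _.
  rewrite subUset sub1set !inE His /=; apply/subsetP => z; rewrite !inE.
  by case/andP => /negbTE ->.
have G1 : forall j, j \in t :\: s -> Gedge C i j.
  move=> j Hj; apply: Gedge_of.
    by apply/eqP => Hij; subst j; move: Hj; rewrite inE (negbTE Hit) andbF.
  move=> a b Hu Hd; apply: W Hd _; rewrite Hu.
  by rewrite subUset !sub1set in_setU1 eqxx /= in_setU1 Hj orbT.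
have G2 : forall j, Gedge C i j -> j \in t :\: s.
  move=> j HG; have Hij : i != j by apply/eqP; case: HG.
  rewrite inE; apply/andP; split.
    apply/negP => Hjs; apply: (notGedge (a := [set i]) (b := [set j])) HG => //.
    apply: inCF11 => //; apply/negP => /EbP[c Hc /andP[H1 H2]].
    move: H1; rewrite sub1set => H1; have /andP[H3 _] := F1 c Hc H1.
    by move: H2; rewrite disjoint_sym disjoints1 (subsetP H3 j Hjs).
  apply/negP => /negP Hjt; apply: (notGedge (a := [set i; j]) (b := set0)) HG; last by rewrite setU0.
  apply: inCF20 => //; apply/negP => /EbP[c Hc /andP[H1 _]].
  move: H1; rewrite subUset !sub1set => /andP[H1 H2]; have /andP[_ H3] := F1 c Hc H1.
  move: (subsetP H3 j H2); rewrite !inE (negbTE Hjt) orbF => /eqP Hji.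
  by move: Hij; rewrite Hji eqxx.
split; last by exists (t :\: s); split => // j; split; [apply: G1 | apply: G2].
split.
  move=> j l Hj Hl Hjl; apply: Gedge_of; first by apply/eqP.
  move=> a b Hu Hd; apply: W Hd _; rewrite Hu subUset !sub1set.
  by rewrite !in_setU1 (G2 _ Hj) (G2 _ Hl) !orbT.
move=> j /CF_box[Hd HE].
case: (eqVneq j i) => [Hji|Hji]; first by subst j; move: Hd; rewrite disjoints1 inE eqxx.
case: St => _ Hcov _; have [c Hc Hjc] := Hcov j.
move/negP: HE; apply; apply/EbP; exists (c :\ i); first exact: F2.
by rewrite sub1set !inE Hji Hjc disjoint_sym disjoints1 !inE eqxx.
Qed.


Lemma byc (b : bool) : (~~ b -> False) -> b.
Proof. by case: b => // H; exfalso; apply: H. Qed.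

Lemma backward C k i : standing C -> degree_two C ->
  elimination_neuron C i -> num_neighbors C i k -> k_piercing C k i.
Proof.
move=> St D2 [Hsimp Hmin] [N [HN HNk]].
pose s := [set j | (j != i) && ~~ Eb C [set i] [set j]].
pose t := s :|: N.
have Hs : forall j, j \in s = (j != i) && ~~ Eb C [set i] [set j] by move=> j; rewrite inE.
have GN : forall j, j \in N -> Gedge C i j by move=> j /HN.
have NG : forall j, Gedge C i j -> j \in N by move=> j /HN.
have Ni : forall j, j \in N -> j != i by move=> j /GN [H _]; apply/eqP => E; apply: H.
have Nis : i \notin s by rewrite Hs eqxx.
have NiN : i \notin N by apply/negP => /Ni; rewrite eqxx.
have Nit : i \notin t by rewrite in_setU negb_or Nis NiN.
have sN : forall j, j \in s -> j \notin N.
  move=> j; rewrite Hs => /andP[Hji HE]; apply/negP => /GN HG.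
  apply: (notGedge (a := [set i]) (b := [set j])) HG => //.
  by apply: inCF11 => //; rewrite eq_sym.
have [c0 Hc0 Hic0] : exists2 c, c \in C & i \in c by case: St => _ H _; apply: H.
have E2 : forall j, j \in N -> Eb C [set i; j] set0.
  move=> j Hj; apply: byc => HE; have HG := GN _ Hj.
  apply: (notGedge (a := [set i; j]) (b := set0)) HG; last by rewrite setU0.
  by apply: inCF20 => //; rewrite eq_sym (Ni _ Hj).
have K1 : forall c, c \in C -> i \in c -> (s \subset c) /\ (c \subset i |: t).
  move=> c Hc Hic; split.
    apply/subsetP => j; rewrite Hs => /andP[_ HE]; apply: byc => Hjc.
    move/negP: HE; apply; apply/EbP; exists c => //.
    by rewrite sub1set Hic disjoint_sym disjoints1.
  apply/subsetP => z Hz; rewrite /t in_setU1 in_setU; case: (eqVneq z i) => //= Hzi.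
  case Hzs: (z \in s) => //=; apply: NG; apply: Gedge_of; first by rewrite eq_sym.
  move=> a b Hu Hd; case: (pair_cases _ Hd Hu); first by rewrite eq_sym.
  - move=> [-> ->]; apply/EbP; exists c => //.
    by rewrite subUset !sub1set Hic Hz disjoints_subset setC0 subsetT.
  - by move=> [-> ->]; move: Hzs; rewrite Hs Hzi /= => /negbFE.
  - move=> [-> ->]; apply: byc => HE; apply: (Hmin z).
    exact: inCF11.
  - by move=> [-> _]; apply: Eb0.
have K2 : forall c, c \in C -> c :\ i \in C.
  move=> c Hc; apply: byc => /mem_of_CF[a [b [HCF Ha Hb]]].
  have [Hd HE] := CF_box HCF.
  case: (CF2_forms St D2 HCF) => [[x [y [Hxy Ea Eb']]]|[x [y [Hxy Ea Eb']]]]; subst a b.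
    move/negP: HE; apply; apply/EbP; exists c => //.
    by rewrite (subset_trans Ha (subsetDl _ _)) disjoints_subset setC0 subsetT.
  move: Ha; rewrite sub1set !inE => /andP[Hxi Hxc].
  case: (eqVneq y i) => Hyi; first by subst y; apply: (Hmin x).
  move/negP: HE; apply; apply/EbP; exists c => //.
  move: Hb; rewrite sub1set Hxc /= disjoint_sym disjoints1 [[disjoint c & _]]disjoint_sym disjoints1.
  by rewrite !inE Hyi.
have Ei : forall y, y \in t -> exists2 c, c \in C & (i \in c) && (y \in c).
  move=> y; rewrite in_setU => /orP[Hy|Hy].
    by exists c0 => //; rewrite Hic0 (subsetP (K1 c0 Hc0 Hic0).1 y Hy).
  move/EbP: (E2 y Hy) => [c Hc /andP[H _]]; exists c => //.
  by move: H; rewrite subUset !sub1set.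
have Ei' : forall y, y \in i |: t -> exists2 c, c \in C & (i \in c) && (y \in c).
  move=> y; rewrite in_setU1 => /orP[/eqP ->|]; last exact: Ei.
  by exists c0 => //; rewrite Hic0.
have EbW : forall c a, c \in C -> a \subset c -> Eb C a set0.
  move=> c a Hc Ha; apply/EbP; exists c => //.
  by rewrite Ha disjoints_subset setC0 subsetT.
have P2a : forall x y, x \in s -> y \in i |: t -> Eb C [set x; y] set0.
  move=> x y Hx /Ei'[c Hc /andP[Hic Hyc]]; apply: (EbW c) => //.
  by rewrite subUset !sub1set Hyc (subsetP (K1 c Hc Hic).1 x Hx).
have P2b : forall y, y \in i |: t -> Eb C [set i; y] set0.
  move=> y /Ei'[c Hc /andP[Hic Hyc]]; apply: (EbW c) => //.
  by rewrite subUset !sub1set Hyc Hic.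
have P2 : forall x y, x != y -> x \in i |: t -> y \in i |: t -> Eb C [set x; y] set0.
  move=> x y Hxy Hx Hy.
  case: (eqVneq x i) => [->|Hxi]; first exact: P2b.
  case: (eqVneq y i) => [Hyi|Hyi]; first by subst y; rewrite setUC; apply: P2b.
  move: Hx Hy; rewrite !in_setU1 (negbTE Hxi) (negbTE Hyi) /= /t !in_setU.
  case/orP => [Hxs|HxN] Hy.
    by apply: P2a => //; rewrite in_setU1 /t in_setU Hy orbT.
  case/orP: Hy => [Hys|HyN].
    rewrite setUC; apply: P2a => //.
    by rewrite in_setU1 /t in_setU HxN !orbT.
  apply: byc => HE.
  have HG := Hsimp x y (GN _ HxN) (GN _ HyN) (elimN eqP Hxy).
  apply: (notGedge (a := [set x; y]) (b := set0)) HG; last by rewrite setU0.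
  exact: inCF20.
have K3 : forall g : {set 'I_n}, s \subset g -> g \subset t -> i |: g \in C.
  move=> g Hsg Hgt; apply: byc => /mem_of_CF[a [b [HCF Ha Hb]]].
  have [Hd HE] := CF_box HCF; move/negP: HE; apply.
  have Hgt' : i |: g \subset i |: t by apply: setUS.
  case: (CF2_forms St D2 HCF) => [[x [y [Hxy Ea Eb']]]|[x [y [Hxy Ea Eb']]]]; subst a b.
    apply: P2 => //; apply: (subsetP Hgt'); apply: (subsetP Ha); rewrite !inE eqxx ?orbT //.
  move: Ha Hb; rewrite sub1set disjoint_sym disjoints1 !in_setU1 negb_or.
  move=> Hx /andP[Hyi Hyg].
  have Hys : y \notin s by apply: contra Hyg; apply: (subsetP Hsg).
  have Eiy : Eb C [set i] [set y].
    by move: Hys; rewrite Hs Hyi /= negbK.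
  case: (eqVneq x i) => [Exi|Hxi]; first by rewrite Exi.
  rewrite (negbTE Hxi) /= in Hx.
  have Hxt := subsetP Hgt x Hx.
  case HyN: (y \in N).
    move: (Hxt); rewrite /t in_setU => /orP[Hxs|HxN].
      move/EbP: Eiy => [c Hc /andP[H1 H2]]; apply/EbP; exists c => //.
      rewrite H2 andbT sub1set; apply: (subsetP (K1 c Hc _).1 x Hxs).
      by rewrite -sub1set.
    apply: byc => HE.
    have HG := Hsimp x y (GN _ HxN) (GN _ HyN) (elimN eqP Hxy).
    apply: (notGedge (a := [set x]) (b := [set y])) HG => //.
  have [c Hc /andP[Hic Hxc]] := Ei x Hxt.
  apply/EbP; exists c => //; rewrite sub1set Hxc /= disjoint_sym disjoints1.
  apply/negP => Hyc; have := subsetP (K1 c Hc Hic).2 y Hyc.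
  by rewrite in_setU1 (negbTE Hyi) /t in_setU (negbTE Hys) HyN.
exists s, t; split.
- exact: subsetUl.
- apply/subsetP => z; rewrite /t in_setU => /orP[Hz|Hz]; rewrite !inE.
    by move: Hz; rewrite Hs => /andP[].
  exact: Ni.
- rewrite -HNk; apply: eq_card => z; rewrite in_setD /t in_setU.
  case Hzs: (z \in s) => //=.
  by rewrite (negbTE (sN z Hzs)).
- apply/subsetP => g; rewrite inE => /andP[H1 H2]; apply/imsetP; exists (i |: g).
    exact: K3.
  have Hig : i \notin g by apply: contra Nit; apply: (subsetP H2).
  apply/setP => z; rewrite in_setD1 in_setU1.
  by case: (eqVneq z i) => [->|Hzi] /=; rewrite ?(negbTE Hig).
- apply/setP => c; rewrite in_setU; apply/idP/orP.
    move=> Hc; case Hic: (i \in c).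
      right; rewrite inE; have [H1 H2] := K1 c Hc Hic.
      by rewrite H2 andbT subUset sub1set Hic H1.
    left; apply/imsetP; exists c => //; apply/setP => z; rewrite in_setD1.
    by case: (eqVneq z i) => [->|] //=; rewrite Hic.
  case=> [/imsetP[d Hd ->]|]; first exact: K2.
  rewrite inE => /andP[H1 H2].
  move: H1; rewrite subUset sub1set => /andP[Hic H1].
  rewrite -(setD1K Hic); apply: K3.
    by rewrite subsetD1 H1 Nis.
  apply/subsetP => z; rewrite in_setD1 => /andP[Hzi Hzc].
  by have := subsetP H2 z Hzc; rewrite in_setU1 (negbTE Hzi).
Qed.

End Main.

Local Close Scope ring_scope.

Theorem proposition1p7 (n : nat) (C : code n) (k : nat) (i : 'I_n) :
  standing C -> degree_two C ->
  (k_piercing C k i <-> elimination_neuron C i /\ num_neighbors C i k).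
Proof.
move=> St D2; split; first exact: forward.
by case=> H1 H2; apply: backward.
Qed.
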